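(* Let $(X,d,\delta)$ be a dilation structure over $\Gamma$, let $A>1$ and $d^{x}$ be as in axiom A2, and let $x\in X$. For $\varepsilon\in\Gamma$ put $\delta^{x}_{\varepsilon}d(u,v)=\frac{1}{|\varepsilon|}d(\delta^{x}_{\varepsilon}u,\delta^{x}_{\varepsilon}v)$. Then for every $\mu\in Abs(\Gamma)$ the net of metric spaces $(\bar B_{d}(x,A),\delta^{x}_{\varepsilon}d)$ converges, as $\varepsilon\to\mu$, in the Gromov–Hausdorff sense to the metric space $(\bar B_{d}(x,A),d^{x})$. Moreover this limit space is a metric cone: for every $\lambda\in\Gamma$, $d^{x}(\delta^{x}_{\lambda}u,\delta^{x}_{\lambda}v)=|\lambda|\,d^{x}(u,v)$.
   Context: $\Gamma$ is a separable topological commutative group with an absolute $Abs(\Gamma)$ (a class of filters $\mu:\{\text{open sets of }\Gamma\}\to\{0,1\}$, each with $\mu(\Gamma)=1$, monotone, and $\mu(A\cup B)+\mu(A\cap B)\ge\mu(A)+\mu(B)$; such that (i) for each $\varepsilon\in\Gamma$ some open $A$ and $\mu$ satisfy $\mu(A)=1$, $\varepsilon\notin A$; (ii) distinct $\mu,\mu'$ are separated by some open $A$ with $\mu(A)>\mu'(A)$; (iii) the class is invariant under transport by elements of $\Gamma$), and $\lim_{\varepsilon\to\mu}f(\varepsilon)=z$ means $\mu(f^{-1}(A))=1$ for all open $A\ni z$. Moreover $|\cdot|:\Gamma\to(0,+\infty)$ is a morphism with $\lim_{\varepsilon\to\mu}|\varepsilon|=0$ for all $\mu\in Abs(\Gamma)$.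 A dilation structure $(X,d,\delta)$ (domains of dilations being ignored, as in the paper): $(X,d)$ is a locally compact metric space and $\delta^{x}_{\varepsilon}y$ ($\varepsilon\in\Gamma$, $x,y\in X$) is such that $x\circ_{\varepsilon}y=\delta^{x}_{\varepsilon}y$ makes $X$ a $\Gamma$-uniform irq, namely: each $(X,\circ_\varepsilon)$ is an idempotent right quasigroup ($x\circ_\varepsilon x=x$, $z\mapsto x\circ_\varepsilon z$ bijective with inverse $x\bullet_\varepsilon\cdot$), $x\circ_{\varepsilon}(x\circ_{\mu}y)=x\circ_{\varepsilon\mu}y$, operations continuous, $X$ separable, and (C) for each $x$, compact $K$, open $U\ni x$ there is an open $A\subset\Gamma$ with $\mu(A)=1$ for all $\mu\in Abs(\Gamma)$ and $x\circ_\varepsilon u\in U$ for $u\in K,\varepsilon\in A$; (D) the limits as $\varepsilon\to\mu$ of $(x\circ_{\varepsilon}u)\bullet_{\varepsilon}(x\circ_{\varepsilon}v)$ and of $x\bullet_{\varepsilon}((x\circ_{\varepsilon}u)\circ_{\varepsilon}v)$ exist uniformly for $x,u,v$ in compact sets. In addition: (A1) the uniformity of the irq is the one induced by $d$; (A2) there is $A>1$ such that for every $x$ there is a function $d^{x}(u,v)$, defined for $u,v\in\bar B_{d}(x,A)$, with $\lim_{\varepsilon\to\mu}\sup\{|\frac{1}{|\varepsilon|}d(\delta^{x}_{\varepsilon}u,\delta^{x}_{\varepsilon}v)-d^{x}(u,v)|: u,v\in\bar B_{d}(x,A)\}=0$ for every $\mu\in Abs(\Gamma)$, uniformly for $x$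 in compact sets, and the uniformity induced by $d^{x}$ equals that induced by $d$ (in particular $d^{x}(u,v)=0$ implies $u=v$). *)

(* Defs.v *)
From HB Require Import structures.
From mathcomp Require Import all_boot all_order all_algebra.
From mathcomp Require Import all_classical all_reals all_analysis.
Set Implicit Arguments. Unset Strict Implicit. Unset Printing Implicit Defensive.
Import Order.TTheory GRing.Theory Num.Theory numFieldNormedType.Exports.
Local Open Scope classical_set_scope.
Local Open Scope ring_scope.

Definition separable_space (T : topologicalType) :=
  exists D : set T, countable D /\ closure D = setT.

Definition comm_topgroup (G : topologicalType)
  (mul : G -> G -> G) (one : G) (inv : G -> G) : Prop :=
  [/\ (forall a b c, mul a (mul b c) = mul (mul a b) c),
      (forall a b, mul a b = mul b a),
      (forall a, mul one a = a),
      (forall a, mul (inv a) a = one) &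
      (continuous (fun p : G * G => mul p.1 p.2) /\ continuous inv)].

(* A filter on the open sets of Gamma, with values in {0,1} = bool.
   Only the values of mu on open sets are meaningful. *)
Definition abs_filter (G : topologicalType) (mu : set G -> bool) : Prop :=
  [/\ mu setT,
      ~~ mu set0,
      (forall A B : set G, open A -> open B -> A `<=` B -> mu A -> mu B) &
      (forall A B : set G, open A -> open B ->
          (mu A + mu B <= mu (A `|` B) + mu (A `&` B))%N)].

(* lim_{eps -> mu} f eps = z : every open neighbourhood of z has a preimage
   containing an open set of mu-measure 1 (equal to "mu (f^-1 U) = 1" when
   that preimage is open, by monotonicity). *)
Definition abs_lim (G : topologicalType) (T : topologicalType)
  (mu : set G -> bool) (f : G -> T) (z : T) : Prop :=
  forall U : set T, open U -> U z ->
    exists O : set G, [/\ open O, mu O & O `<=` f @^-1` U].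

Definition absolute (G : topologicalType) (mul : G -> G -> G)
  (Abs : set (set G -> bool)) : Prop :=
  [/\ (forall mu, Abs mu -> abs_filter mu),
      (forall eps : G, exists A : set G, exists mu,
          [/\ open A, Abs mu, mu A & ~ A eps]),
      (forall mu mu', Abs mu -> Abs mu' ->
          (exists A : set G, open A /\ mu A <> mu' A) ->
          exists A : set G, [/\ open A, mu A & ~~ mu' A]) &
      (forall mu (g : G), Abs mu ->
          exists mu', Abs mu' /\
            forall A : set G, open A -> mu' A = mu ((mul g) @` A))].

Definition abs_morphism (R : realType) (G : topologicalType)
  (mul : G -> G -> G) (Abs : set (set G -> bool)) (nrm : G -> R) : Prop :=
  [/\ (forall a, 0 < nrm a),
      (forall a b, nrm (mul a b) = nrm a * nrm b) &
      (forall mu, Abs mu -> abs_lim mu nrm 0)].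

Definition metric_of (R : realType) (X : pseudoMetricType R)
  (d : X -> X -> R) : Prop :=
  [/\ (forall x y, d x y = 0 <-> x = y),
      (forall x y, d x y = d y x),
      (forall x y z, d x z <= d x y + d y z) &
      (* the pseudometric structure of X is the one induced by d (A1) *)
      (forall (x : X) (e : R), 0 < e -> ball x e = [set y | d x y < e])].

Definition cball (R : realType) (X : Type) (d : X -> X -> R) (x : X) (r : R)
  : set X := [set y | d x y <= r].

(* Gamma-uniform idempotent right quasigroup x o_eps y = delta eps x y,
   with inverse x bullet_eps y = deltainv eps x y. *)
Definition gamma_uniform_irq (R : realType) (G : topologicalType)
  (mul : G -> G -> G) (Abs : set (set G -> bool))
  (X : pseudoMetricType R) (d : X -> X -> R)
  (delta deltainv : G -> X -> X -> X) : Prop :=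
  [/\ (forall eps x, delta eps x x = x),
      (forall eps x y, deltainv eps x (delta eps x y) = y),
      (forall eps x y, delta eps x (deltainv eps x y) = y),
      (forall eps m x y, delta eps x (delta m x y) = delta (mul eps m) x y) &
   [/\ continuous (fun p : G * X * X => delta p.1.1 p.1.2 p.2),
      continuous (fun p : G * X * X => deltainv p.1.1 p.1.2 p.2),
      separable_space X,
      (forall (x : X) (K U : set X), compact K -> open U -> U x ->
          exists O : set G, [/\ open O, (forall mu, Abs mu -> mu O) &
             forall eps u, O eps -> K u -> U (delta eps x u)]) &
      (forall mu, Abs mu -> exists F1 F2 : X -> X -> X -> X,
          forall K : set X, compact K -> forall e : R, 0 < e ->
          exists O : set G, [/\ open O, mu O &
            forall eps x u v, O eps -> K x -> K u -> K v ->
              d (F1 x u v) (deltainv eps (delta eps x u) (delta eps x v)) < e /\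
              d (F2 x u v) (deltainv eps x (delta eps (delta eps x u) v)) < e])]].

(* Dilation structure (X,d,delta) over Gamma (domains ignored). *)
Definition dilation_structure (R : realType) (G : topologicalType)
  (mul : G -> G -> G) (one : G) (inv : G -> G)
  (Abs : set (set G -> bool)) (nrm : G -> R)
  (X : pseudoMetricType R) (d : X -> X -> R)
  (delta deltainv : G -> X -> X -> X) : Prop :=
  [/\ comm_topgroup mul one inv, separable_space G, absolute mul Abs,
      abs_morphism mul Abs nrm &
   [/\ metric_of d, locally_compact [set: X] &
      gamma_uniform_irq mul Abs d delta deltainv]].

Definition axiom_A2 (R : realType) (G : topologicalType)
  (Abs : set (set G -> bool)) (nrm : G -> R)
  (X : pseudoMetricType R) (d : X -> X -> R)
  (delta : G -> X -> X -> X) (A : R) (dx : X -> X -> X -> R) : Prop :=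
  [/\ 1 < A,
      (forall mu, Abs mu -> forall K : set X, compact K ->
        forall e : R, 0 < e -> exists O : set G, [/\ open O, mu O &
          forall eps x u v, O eps -> K x -> cball d x A u -> cball d x A v ->
            `| d (delta eps x u) (delta eps x v) / nrm eps - dx x u v | < e]) &
      (forall x : X,
        (forall e : R, 0 < e -> exists e' : R, 0 < e' /\
           forall u v, cball d x A u -> cball d x A v ->
             d u v < e' -> `| dx x u v | < e) /\
        (forall e : R, 0 < e -> exists e' : R, 0 < e' /\
           forall u v, cball d x A u -> cball d x A v ->
             `| dx x u v | < e' -> d u v < e))].

(* Gromov-Hausdorff distance: d_GH((P1,d1),(P2,d2)) < r iff there is a
   (semi-)metric D on the disjoint union P1 + P2 extending d1 and d2 for
   which the Hausdorff distance between P1 and P2 is < r.             *)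

Definition in_union (T1 T2 : Type) (P1 : set T1) (P2 : set T2)
  (z : T1 + T2) : Prop :=
  match z with inl a => P1 a | inr b => P2 b end.

Definition admissible_union_metric (R : realType) (T1 T2 : Type)
  (P1 : set T1) (d1 : T1 -> T1 -> R) (P2 : set T2) (d2 : T2 -> T2 -> R)
  (D : T1 + T2 -> T1 + T2 -> R) : Prop :=
  [/\ (forall z, in_union P1 P2 z -> D z z = 0),
      (forall z w, in_union P1 P2 z -> in_union P1 P2 w -> D z w = D w z),
      (forall z w t, in_union P1 P2 z -> in_union P1 P2 w ->
          in_union P1 P2 t -> D z t <= D z w + D w t),
      (forall a b, P1 a -> P1 b -> D (inl a) (inl b) = d1 a b) &
      (forall a b, P2 a -> P2 b -> D (inr a) (inr b) = d2 a b)].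

Definition GH_dist_lt (R : realType) (T1 T2 : Type)
  (P1 : set T1) (d1 : T1 -> T1 -> R) (P2 : set T2) (d2 : T2 -> T2 -> R)
  (r : R) : Prop :=
  exists D : T1 + T2 -> T1 + T2 -> R,
    admissible_union_metric P1 d1 P2 d2 D /\
    exists s : R, s < r /\
      (forall a, P1 a -> exists b, P2 b /\ D (inl a) (inr b) < s) /\
      (forall b, P2 b -> exists a, P1 a /\ D (inl a) (inr b) < s).

Definition GH_converges (R : realType) (G : topologicalType)
  (mu : set G -> bool) (T T0 : Type) (P : set T) (dn : G -> T -> T -> R)
  (P0 : set T0) (d0 : T0 -> T0 -> R) : Prop :=
  forall r : R, 0 < r -> exists O : set G, [/\ open O, mu O &
    forall eps, O eps -> GH_dist_lt P (dn eps) P0 d0 r].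

Definition rescaled_dist (R : realType) (G : Type) (nrm : G -> R)
  (X : Type) (d : X -> X -> R) (delta : G -> X -> X -> X) (x : X)
  (eps : G) : X -> X -> R :=
  fun u v => d (delta eps x u) (delta eps x v) / nrm eps.

(* Main.v *)
Require Import Defs.
From HB Require Import structures.
From mathcomp Require Import all_boot all_order all_algebra.
From mathcomp Require Import all_classical all_reals all_analysis.
From mathcomp Require Import ring lra.
Import Order.TTheory GRing.Theory Num.Theory numFieldNormedType.Exports.
Local Open Scope classical_set_scope.
Local Open Scope ring_scope.
Set Implicit Arguments.

Section GH.
Variables (R : realType) (T : Type) (P : set T) (d1 d2 : T -> T -> R) (e : R).
Hypothesis e0 : 0 < e.
Hypothesis h10 : forall a, P a -> d1 a a = 0.
Hypothesis h1s : forall a b, P a -> P b -> d1 a b = d1 b a.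
Hypothesis h1t : forall a b c, P a -> P b -> P c -> d1 a c <= d1 a b + d1 b c.
Hypothesis h20 : forall a, P a -> d2 a a = 0.
Hypothesis h2s : forall a b, P a -> P b -> d2 a b = d2 b a.
Hypothesis h2t : forall a b c, P a -> P b -> P c -> d2 a c <= d2 a b + d2 b c.
Hypothesis h12 : forall a b, P a -> P b -> d1 a b <= d2 a b + e.
Hypothesis h21 : forall a b, P a -> P b -> d2 a b <= d1 a b + e.

Lemma d1ge0 a b : P a -> P b -> 0 <= d1 a b.
Proof.
move=> Pa Pb; have := h1t Pa Pb Pa; rewrite h10 // (h1s Pb Pa).
lra.
Qed.
Lemma d2ge0 a b : P a -> P b -> 0 <= d2 a b.
Proof.
move=> Pa Pb; have := h2t Pa Pb Pa; rewrite h20 // (h2s Pb Pa).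
lra.
Qed.

Definition II a b := inf [set d1 a c + d2 c b | c in P].

Lemma II_le a b c : P a -> P b -> P c -> II a b <= d1 a c + d2 c b.
Proof.
move=> Pa Pb Pc; apply: ge_inf; last by exists c.
exists 0 => y [c' Pc' <-]; by rewrite addr_ge0 ?d1ge0 ?d2ge0.
Qed.

Lemma II_ge a b y : P b -> (forall c, P c -> y <= d1 a c + d2 c b) -> y <= II a b.
Proof.
move=> Pb H; apply: lb_le_inf; first by exists (d1 a b + d2 b b), b.
by move=> z [c Pc <-]; apply: H.
Qed.

Definition DD (z w : T + T) : R :=
  match z, w with
  | inl a, inl b => d1 a b
  | inr a, inr b => d2 a b
  | inl a, inr b => e + II a b
  | inr b, inl a => e + II a b
  end.

Lemma caseLLR a a' b : P a -> P a' -> P b -> II a b <= d1 a a' + II a' b.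
Proof.
move=> Pa Pa' Pb; rewrite -lerBlDl; apply: II_ge => // c Pc.
rewrite lerBlDl; apply: le_trans (II_le Pa Pb Pc) _.
by rewrite addrA lerD2r h1t.
Qed.

Lemma caseLRR a b b' : P a -> P b -> P b' -> II a b' <= II a b + d2 b b'.
Proof.
move=> Pa Pb Pb'; rewrite -lerBlDr; apply: II_ge => // c Pc.
rewrite lerBlDr; apply: le_trans (II_le Pa Pb' Pc) _.
by rewrite -addrA lerD2l h2t.
Qed.

Lemma caseLRL a a' b : P a -> P a' -> P b -> d1 a a' <= (e + II a b) + (e + II a' b).
Proof.
move=> Pa Pa' Pb.
have H1 : forall c, P c -> d1 a a' - 2 * e - (d1 a c + d2 c b) <= II a' b.
  move=> c Pc; apply: II_ge => // c' Pc'.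
  have t1 := h1t Pa Pc Pa'.
  have t2 := h1t Pc Pc' Pa'.
  have t3 := h12 Pc Pc'.
  have t4 := h2t Pc Pb Pc'.
  have t5 : d1 c' a' = d1 a' c' by rewrite h1s.
  have t6 : d2 b c' = d2 c' b by rewrite h2s.
  have := e0; lra.
have H2 : d1 a a' - 2 * e - II a' b <= II a b.
  apply: II_ge => // c Pc; have := H1 c Pc; lra.
lra.
Qed.

Lemma caseRLR a b b' : P a -> P b -> P b' -> d2 b b' <= (e + II a b) + (e + II a b').
Proof.
move=> Pa Pb Pb'.
have H1 : forall c, P c -> d2 b b' - 2 * e - (d1 a c + d2 c b) <= II a b'.
  move=> c Pc; apply: II_ge => // c' Pc'.
  have t1 := h2t Pb Pc Pb'.
  have t2 := h2t Pc Pc' Pb'.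
  have t3 := h21 Pc Pc'.
  have t4 := h1t Pc Pa Pc'.
  have t5 : d2 b c = d2 c b by rewrite h2s.
  have t6 : d1 c a = d1 a c by rewrite h1s.
  have := e0; lra.
have H2 : d2 b b' - 2 * e - II a b' <= II a b.
  apply: II_ge => // c Pc; have := H1 c Pc; lra.
lra.
Qed.

Lemma GH_abs r : 2 * e < r -> GH_dist_lt P d1 P d2 r.
Proof.
move=> er.
exists DD; split.
  split.
  - by case=> a /= Pa; [exact: h10 | exact: h20].
  - case=> a; case=> b /= Pa Pb //; [exact: h1s | exact: h2s].
  - case=> a; case=> b; case=> c /= Pa Pb Pc.
    + exact: h1t.
    + have := caseLLR Pa Pb Pc; lra.
    + exact: caseLRL.
    + have := caseLRR Pa Pb Pc; lra.
    + have := caseLLR Pc Pb Pa; have := h1s Pb Pc; lra.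
    + exact: caseRLR.
    + have := caseLRR Pc Pb Pa; have := h2s Pa Pb; lra.
    + exact: h2t.
  - by [].
  - by [].
exists (2 * e); split => //; split.
  move=> a Pa; exists a; split => //=.
  have := II_le Pa Pa Pa; rewrite (h10 Pa) (h20 Pa) => H.
  have := e0; lra.
move=> b Pb; exists b; split => //=.
have := II_le Pb Pb Pb; rewrite (h10 Pb) (h20 Pb) => H.
have := e0; lra.
Qed.
End GH.

Section PM.
Variables (R : realType) (G T : Type) (P : set T) (dn : G -> T -> T -> R) (d0 : T -> T -> R).
Hypothesis H : forall e : R, 0 < e -> exists eps, forall u v, P u -> P v -> `|dn eps u v - d0 u v| < e.
Hypothesis n0 : forall eps a, P a -> dn eps a a = 0.
Hypothesis ns : forall eps a b, P a -> P b -> dn eps a b = dn eps b a.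
Hypothesis nt : forall eps a b c, P a -> P b -> P c -> dn eps a c <= dn eps a b + dn eps b c.

Lemma abs_lt {a b e : R} : `|a - b| < e -> b - e < a /\ a < b + e.
Proof. rewrite ltr_norml => /andP [h1 h2]; split; lra. Qed.

Lemma pm0 a : P a -> d0 a a = 0.
Proof.
move=> Pa; apply/eqP; rewrite -normr_eq0 eq_le normr_ge0 andbT.
apply/ler_addgt0Pr => e e0; have [eps Ht] := H _ e0.
have := Ht _ _ Pa Pa; rewrite n0 // sub0r normrN => h; rewrite add0r; exact: ltW.
Qed.

Lemma pms a b : P a -> P b -> d0 a b = d0 b a.
Proof.
move=> Pa Pb; apply/eqP; rewrite -subr_eq0 -normr_eq0 eq_le normr_ge0 andbT.
apply/ler_addgt0Pr => e e0.
have e20 : 0 < e / 2 by rewrite divr_gt0.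
have [eps Ht] := H _ e20.
have [h1 h2] := abs_lt (Ht _ _ Pa Pb); have [h3 h4] := abs_lt (Ht _ _ Pb Pa).
have h5 := ns eps Pa Pb.
rewrite add0r ler_norml; apply/andP; split; lra.
Qed.

Lemma pmt a b c : P a -> P b -> P c -> d0 a c <= d0 a b + d0 b c.
Proof.
move=> Pa Pb Pc; apply/ler_addgt0Pr => e e0.
have e20 : 0 < e / 3 by rewrite divr_gt0.
have [eps Ht] := H _ e20.
have [h1 h2] := abs_lt (Ht _ _ Pa Pb); have [h3 h4] := abs_lt (Ht _ _ Pb Pc).
have [h5 h6] := abs_lt (Ht _ _ Pa Pc).
have h7 := nt eps Pa Pb Pc.
lra.
Qed.
End PM.

Lemma mu_inter (G : topologicalType) (mu : set G -> bool) (O1 O2 : set G) :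
  abs_filter mu -> open O1 -> open O2 -> mu O1 -> mu O2 ->
  exists eps, O1 eps /\ O2 eps.
Proof.
move=> [_ mu0 _ mud] o1 o2 m1 m2.
have := mud _ _ o1 o2; rewrite m1 m2.
case mI: (mu (O1 `&` O2)); last first.
  by case: (mu (O1 `|` O2)).
move=> _.
have : (O1 `&` O2) != set0.
  apply/negP => /eqP E; rewrite E in mI; by rewrite mI in mu0.
by move/set0P => [eps [h1 h2]]; exists eps.
Qed.

Theorem proposition6p11 (R : realType) (G : topologicalType)
  (mul : G -> G -> G) (one : G) (inv : G -> G)
  (Abs : set (set G -> bool)) (nrm : G -> R)
  (X : pseudoMetricType R) (d : X -> X -> R)
  (delta deltainv : G -> X -> X -> X) (A : R) (dx : X -> X -> X -> R) :
  dilation_structure mul one inv Abs nrm d delta deltainv ->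
  axiom_A2 Abs nrm d delta A dx ->
  forall x : X,
    (forall mu, Abs mu ->
       GH_converges mu (cball d x A) (rescaled_dist nrm d delta x)
                       (cball d x A) (dx x)) /\
    (forall (lam : G) (u v : X),
       cball d x A u -> cball d x A v ->
       cball d x A (delta lam x u) -> cball d x A (delta lam x v) ->
       dx x (delta lam x u) (delta lam x v) = nrm lam * dx x u v).
Proof.
move=> [[Gass Gcomm G1 Ginv [Gc Ginvc]] _ [Hfilt Hi Hii Hiii] [nrm0 nrmM _]
  [[dx0 dsym dtri dball] _ [del_id _ _ delM _]]] [A1 Hlim _] x.
set P := cball d x A.
pose dn := rescaled_dist nrm d delta x.
have Kx : compact [set x] := @compact_set1 _ x.
have Kxx : [set x] x by [].
have n0 : forall eps a, P a -> dn eps a a = 0.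
  by move=> eps a _; rewrite /dn /rescaled_dist (proj2 (dx0 _ _) erefl) mul0r.
have ns : forall eps a b, P a -> P b -> dn eps a b = dn eps b a.
  by move=> eps a b _ _; rewrite /dn /rescaled_dist dsym.
have nt : forall eps a b c, P a -> P b -> P c -> dn eps a c <= dn eps a b + dn eps b c.
  move=> eps a b c _ _ _; rewrite /dn /rescaled_dist -mulrDl; apply: ler_wpM2r.
    by rewrite invr_ge0 ltW.
  exact: dtri.
have est : forall mu, Abs mu -> forall e : R, 0 < e -> exists O : set G, [/\ open O, mu O &
     forall eps u v, O eps -> P u -> P v -> `|dn eps u v - dx x u v| < e].
  move=> mu Amu e e0; have [W [oO mO HO]] := Hlim mu Amu _ Kx e e0.
  by exists W; split => // eps u v Oe Pu Pv; exact: HO.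
have dxpm : forall mu, Abs mu ->
   [/\ forall a, P a -> dx x a a = 0,
       forall a b, P a -> P b -> dx x a b = dx x b a &
       forall a b c, P a -> P b -> P c -> dx x a c <= dx x a b + dx x b c].
  move=> mu Amu.
  have HH : forall e : R, 0 < e -> exists eps, forall u v, P u -> P v ->
      `|dn eps u v - dx x u v| < e.
    move=> e e0; have [W [oO mO HO]] := est mu Amu e e0.
    have [eps [Oe _]] := @mu_inter _ mu W W (Hfilt mu Amu) oO oO mO mO.
    by exists eps => u v; apply: HO.
  split.
  - exact: pm0 HH n0.
  - exact: pms HH ns.
  - exact: pmt HH nt.
split.
  move=> mu Amu r r0.
  have [dx0' dxs dxt] := dxpm mu Amu.
  have e0 : 0 < r / 3 by rewrite divr_gt0.
  have [W [oO mO HO]] := est mu Amu _ e0.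
  exists W; split => // eps Oe.
  apply: (@GH_abs R X P (dn eps) (dx x) (r / 3)) => //.
  - exact: n0.
  - exact: ns.
  - exact: nt.
  - move=> a b Pa Pb; have [h1 h2] := @abs_lt R _ _ _ (HO _ _ _ Oe Pa Pb); lra.
  - move=> a b Pa Pb; have [h1 h2] := @abs_lt R _ _ _ (HO _ _ _ Oe Pa Pb); lra.
  - lra.
move=> lam u v Pu Pv Plu Plv.
have [A0 [mu0 [_ Amu0 _ _]]] := Hi lam.
have [mu1 [Amu1 Hmu1]] := Hiii mu0 (inv lam) Amu0.
have [dx0' dxs dxt] := dxpm mu0 Amu0.
set nl := nrm lam.
have nl0 : 0 < nl := nrm0 lam.
apply/eqP; rewrite -subr_eq0 -normr_eq0 eq_le normr_ge0 andbT.
apply/ler_addgt0Pr => e e0; rewrite add0r.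
set e' := e / (1 + nl).
have e'0 : 0 < e' by rewrite divr_gt0 // ltr_wpDr // ltW.
have ee : e' + nl * e' = e by rewrite /e'; field; rewrite gt_eqF // ltr_wpDr // ltW.
have [W1 [] ow1 m1 H1] := est mu0 Amu0 _ e'0.
have [W2 [] ow2 m2 H2] := est mu1 Amu1 _ e'0.
have imE : (mul (inv lam)) @` W2 = (mul lam) @^-1` W2.
  rewrite eqEsubset; split => y.
    move=> [z Wz <-] /=; by rewrite Gass (Gcomm lam) Ginv G1.
  move=> /= Wy; exists (mul lam y) => //.
  by rewrite Gass Ginv G1.
have oim : open ((mul (inv lam)) @` W2).
  rewrite imE.
  have -> : (mul lam) @^-1` W2 =
     (fun y : G => (lam, y)) @^-1` ((fun p : G * G => mul p.1 p.2) @^-1` W2) by [].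
  move: (Gc) => /continuousP Gc'.
  have cp : continuous (fun y : G => (lam, y)).
    by move=> y; apply: cvg_pair; [exact: cvg_cst | exact: cvg_id].
  by move: cp => /continuousP; apply; apply: Gc'.
have mim : mu0 ((mul (inv lam)) @` W2) by rewrite -Hmu1.
have [eps [W1e [z W2z ez]]] := @mu_inter _ mu0 _ _ (Hfilt mu0 Amu0) ow1 oim m1 mim.
have zE : mul eps lam = z by rewrite -ez Gcomm Gass (Gcomm lam) Ginv G1.
have h1 := H1 _ _ _ W1e Plu Plv.
have h2 := H2 _ _ _ W2z Pu Pv.
have dnE : dn eps (delta lam x u) (delta lam x v) = nl * dn z u v.
  rewrite /dn /rescaled_dist !delM zE -zE nrmM -/nl.
  have := nrm0 eps; move=> ne0.
  field; rewrite ?gt_eqF //.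
rewrite dnE in h1.
have [h3 h4] := @abs_lt R _ _ _ h1.
have [h5 h6] := @abs_lt R _ _ _ h2.
have h7 : nl * (dn z u v) < nl * (dx x u v + e') by rewrite ltr_pM2l.
have h8 : nl * (dx x u v - e') < nl * (dn z u v) by rewrite ltr_pM2l.
rewrite mulrDr in h7; rewrite mulrBr in h8.
rewrite ler_norml; apply/andP; split; lra.
Qed.
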